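(* Let $\mathcal{G}$, $u$, $v$ be as in the context (finite bicoloured graph with both a pure green and a pure red path from $u$ to $v$, and with fixed weights). Then for every $r$ with $0\le r<r_{tot}$ there exists a red edge $e$ of $\mathcal{G}$ with $\Delta(r)=\Delta_e(r)$.
   Context: $\mathcal{G}=\langle V,E,\omega,\lambda\rangle$ is a finite weighted coloured--edge graph (directed multigraph, weights $\omega:E\to\mathbb{R}^+$, colours $\lambda:E\to M$) with $M=\{\text{red},\text{green}\}$. A path from $u$ to $v$ is a sequence of consecutive edges from $u$ to $v$ visiting no vertex twice; $\omega_{\text{red}}(p)$, $\omega_{\text{green}}(p)$ denote the sums of weights of the red, resp. green, edges of $p$. A path $p$ from $u$ to $v$ is minimal if there is no path $q$ from $u$ to $v$ with $\omega_{\text{red}}(q)\le\omega_{\text{red}}(p)$, $\omega_{\text{green}}(q)\le\omega_{\text{green}}(p)$ and at least one of these inequalities strict. It is assumed there is a path from $u$ to $v$ all of whose edges are green and a path from $u$ to $v$ all of whose edges are red; $r_{tot}$ is the least red weight of a path from $u$ to $v$ all of whose edges are red. For a red edge $e$ and $r\ge0$: $g_r$ is the least value of $\omega_{\text{green}}(p)$ over all paths $p$ from $u$ to $v$ not containing $e$ with $\omega_{\text{red}}(p)\le r$; $\Delta_e(r)$ is the least value of $\omega_{\text{red}}(q)$ over all paths $q$ from $u$ to $v$ containing $e$ with $\omega_{\text{green}}(q)<g_r$, or $\infty$ if no such path exists. For $0\le r<r_{tot}$, $\Delta(r)$ is the least value of $\omega_{\text{red}}(q)$ over all minimal paths $q$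 from $u$ to $v$ with $\omega_{\text{red}}(q)>r$ (so $\Delta(r)>r$). *)

(* Defs.v *)
From HB Require Import structures.
From mathcomp Require Import all_boot all_order all_algebra.
Set Implicit Arguments. Unset Strict Implicit. Unset Printing Implicit Defensive.
Import Order.TTheory GRing.Theory Num.Theory.
Local Open Scope ring_scope.

Inductive colour := Red | Green.
Definition is_red (c : colour) : bool := if c is Red then true else false.
Definition is_green (c : colour) : bool := if c is Green then true else false.

Section Graph.
Variables (R : realFieldType) (V E : finType) (src tgt : E -> V)
          (w : E -> R) (col : E -> colour).

Fixpoint walk (x y : V) (p : seq E) : bool :=
  match p with
  | [::] => x == y
  | e :: p' => (src e == x) && walk (tgt e) y p'
  end.

Definition is_path (u v : V) (p : seq E) : bool :=
  walk u v p && uniq (u :: map tgt p).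

Definition wred (p : seq E) : R := \sum_(e <- p | is_red (col e)) w e.
Definition wgreen (p : seq E) : R := \sum_(e <- p | is_green (col e)) w e.

Definition all_red (p : seq E) : bool := all (fun e => is_red (col e)) p.
Definition all_green (p : seq E) : bool := all (fun e => is_green (col e)) p.

Definition minimal_path (u v : V) (p : seq E) : Prop :=
  is_path u v p /\
  ~ (exists q, is_path u v q /\ wred q <= wred p /\ wgreen q <= wgreen p /\
               (wred q < wred p \/ wgreen q < wgreen p)).

Definition least (S : R -> Prop) (x : R) : Prop :=
  S x /\ forall y, S y -> x <= y.

Definition rtot_spec (u v : V) (rt : R) : Prop :=
  least (fun x => exists p, is_path u v p /\ all_red p /\ wred p = x) rt.

Definition g_spec (u v : V) (e : E) (r g : R) : Prop :=
  least (fun x => exists p, is_path u v p /\ e \notin p /\ wred p <= r /\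
                             wgreen p = x) g.

(* Delta_e(r), with None standing for infinity *)
Definition Delta_e_spec (u v : V) (e : E) (r : R) (d : option R) : Prop :=
  exists g, g_spec u v e r g /\
  let S := fun x => exists q, is_path u v q /\ e \in q /\ wgreen q < g /\
                               wred q = x in
  match d with
  | None => forall x, ~ S x
  | Some x => least S x
  end.

Definition Delta_spec (u v : V) (r d : R) : Prop :=
  least (fun x => exists q, minimal_path u v q /\ r < wred q /\ wred q = x) d.

End Graph.

(* Main.v *)
Require Import Defs.
From HB Require Import structures.
From mathcomp Require Import all_boot all_order all_algebra.
From mathcomp Require Import lra.
From Stdlib Require Import Classical_Prop.
Import Order.TTheory GRing.Theory Num.Theory.
Local Open Scope ring_scope.

Fixpoint seqs_upto (E : finType) (n : nat) : seq (seq E) :=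
  if n is n'.+1 then [::] :: [seq e :: s | e <- enum E, s <- seqs_upto E n']
  else [:: [::]].

Lemma seqs_upto_mem {E : finType} n (s : seq E) :
  (size s <= n)%N -> s \in seqs_upto E n.
Proof.
elim: n s => [|n IH] [|x s] //=; rewrite ?inE ?eqxx //.
move=> Hs.
by apply: (allpairs_f (fun e s => e :: s)); [rewrite mem_enum | exact: IH].
Qed.

Lemma ex_min_list {R : realFieldType} {E : finType} {P : seq E -> Prop}
  (f : seq E -> R) {L : seq (seq E)} :
  (exists p, P p /\ p \in L) ->
  exists p, P p /\ p \in L /\ forall q, P q -> q \in L -> f p <= f q.
Proof.
elim: L => [|x L IH]; first by case=> p [_].
move=> Hex.
have [Px|nPx] := classic (P x).
- have [[p [Pp pL]]|nL] := classic (exists p, P p /\ p \in L).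
  + have [m [Pm [mL Hm]]] := IH (ex_intro _ p (conj Pp pL)).
    have [le|lt] := lerP (f x) (f m).
    * exists x; split=> //; split; first by rewrite inE eqxx.
      move=> q Pq; rewrite inE => /orP [/eqP->//|qL].
      exact: le_trans le (Hm q Pq qL).
    * exists m; split=> //; split; first by rewrite inE mL orbT.
      move=> q Pq; rewrite inE => /orP [/eqP->|qL]; first exact: ltW.
      exact: Hm.
  + exists x; split=> //; split; first by rewrite inE eqxx.
    move=> q Pq; rewrite inE => /orP [/eqP->//|qL].
    by exfalso; apply: nL; exists q.
- have : exists p, P p /\ p \in L.
    case: Hex => p [Pp]; rewrite inE => /orP [/eqP Hp|pL].
    + by subst p.
    + by exists p.
  move=> /IH [m [Pm [mL Hm]]].
  exists m; split=> //; split; first by rewrite inE mL orbT.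
  move=> q Pq; rewrite inE => /orP [/eqP Hq|qL]; last exact: Hm.
  by subst q.
Qed.

Lemma ex_min {R : realFieldType} {E : finType} (P : seq E -> Prop)
  (f : seq E -> R) :
  (forall p, P p -> uniq p) -> (exists p, P p) ->
  exists p, P p /\ forall q, P q -> f p <= f q.
Proof.
move=> Hu [p Pp].
have mem : forall q, P q -> q \in seqs_upto E #|E|.
  move=> q Pq; apply: seqs_upto_mem.
  by rewrite -(card_uniqP (Hu q Pq)) max_card.
have [m [Pm [_ Hm]]] := ex_min_list f (ex_intro _ p (conj Pp (mem p Pp))).
by exists m; split=> // q Pq; apply: Hm (mem q Pq).
Qed.

Lemma path_uniq {V E : finType} {src tgt : E -> V} {u v p} :
  is_path src tgt u v p -> uniq p.
Proof.
by move=> /andP [_ /= /andP [_ /map_uniq]].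
Qed.

Lemma wgreen_ge0 {R : realFieldType} {E : finType} {w : E -> R} col p :
  (forall e, 0 < w e) -> 0 <= wgreen w col p.
Proof. by move=> wp; apply: sumr_ge0 => e _; apply: ltW. Qed.

Lemma wgreen0_allred {R : realFieldType} {E : finType} {w : E -> R} {col p} :
  (forall e, 0 < w e) -> wgreen w col p = 0 -> all_red col p.
Proof.
move=> wp; elim: p => [|e p IH] //=.
rewrite /wgreen big_cons -/(wgreen w col p).
case: (col e) => /=.
- by move=> H; apply: IH.
- move=> H; have := wp e; have := wgreen_ge0 col p wp. lra.
Qed.

Lemma allgreen_wred0 {R : realFieldType} {E : finType} {w : E -> R} {col p} :
  all_green col p -> wred w col p = 0.
Proof.
elim: p => [|e p IH] /=; first by rewrite /wred big_nil.
rewrite /wred big_cons -/(wred w col p).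
by case: (col e) => //= /IH.
Qed.

Lemma wred_sub {R : realFieldType} {E : finType} {w : E -> R} {col p q} :
  (forall e, 0 < w e) -> uniq q -> uniq p ->
  (forall e, e \in q -> is_red (col e) -> e \in p) -> wred w col q <= wred w col p.
Proof.
move=> wp uq up sub.
rewrite /wred -(big_filter q) -(big_filter p).
rewrite !big_uniq ?filter_uniq //.
rewrite [X in X <= _]big_mkcond [X in _ <= X]big_mkcond /=.
apply: ler_sum => e _.
case: ifP => [|_]; last by case: ifP => _ //; apply: ltW.
rewrite mem_filter => /andP [re eq].
by rewrite mem_filter re (sub e eq re).
Qed.

Lemma dom_min {R : realFieldType} {V E : finType} {src tgt : E -> V}
    (w : E -> R) (col : E -> colour) {u v : V} {q} :
  is_path src tgt u v q ->
  exists q', minimal_path src tgt w col u v q' /\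
    wred w col q' <= wred w col q /\ wgreen w col q' <= wgreen w col q.
Proof.
move=> Hq.
have [m [[Pm [Rm Gm]] Hm]] := ex_min
  (fun x => is_path src tgt u v x /\ wred w col x <= wred w col q /\
            wgreen w col x <= wgreen w col q)
  (fun x => wred w col x + wgreen w col x)
  (fun x H => path_uniq (proj1 H))
  (ex_intro _ q (conj Hq (conj (lexx _) (lexx _)))).
exists m; split=> //; split=> //.
move=> [z [Pz [Rz [Gz Hs]]]].
have := Hm z (conj Pz (conj (le_trans Rz Rm) (le_trans Gz Gm))).
case: Hs => Hs; lra.
Qed.

Theorem lemma5 (R : realFieldType) (V E : finType) (src tgt : E -> V)
    (w : E -> R) (col : E -> colour) (u v : V)
    (w_pos : forall e, 0 < w e)
    (green_path : exists p, is_path src tgt u v p && all_green col p)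
    (red_path : exists p, is_path src tgt u v p && all_red col p)
    (rtot : R) (Hrtot : rtot_spec src tgt w col u v rtot)
    (r : R) (r_ge0 : 0 <= r) (r_lt : r < rtot) :
  exists (d : R) (e : E),
    Delta_spec src tgt w col u v r d /\ is_red (col e) /\
    Delta_e_spec src tgt w col u v e r (Some d).
Proof.
case: Hrtot => [[p0 [P0 [R0 W0]]] Hrt].
have M0 : minimal_path src tgt w col u v p0.
  split=> // -[z [Pz [Rz [Gz Hs]]]].
  have G0 : wgreen w col p0 = 0.
    by rewrite /wgreen big_seq_cond big1 // => e /andP [/(allP R0)]; case: (col e).
  have Gz0 : wgreen w col z = 0.
    by apply/eqP; rewrite eq_le (wgreen_ge0 col z w_pos) andbT -G0.
  have := Hrt _ (ex_intro _ z (conj Pz (conj (wgreen0_allred w_pos Gz0) erefl))).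
  case: Hs => Hs; lra.
have H0 : r < wred w col p0 by rewrite W0.
have [qs [[Mqs Rqs] Hqs]] := ex_min
  (fun x => minimal_path src tgt w col u v x /\ r < wred w col x)
  (fun x => wred w col x)
  (fun x H => path_uniq (proj1 (proj1 H)))
  (ex_intro _ p0 (conj M0 H0)).
case: green_path => pg /andP [Pg Gg].
have Hg : wred w col pg <= r by rewrite allgreen_wred0.
have [p [[Pp Rp] Hp]] := ex_min
  (fun x => is_path src tgt u v x /\ wred w col x <= r)
  (fun x => wgreen w col x)
  (fun x H => path_uniq (proj1 H))
  (ex_intro _ pg (conj Pg Hg)).
have Gqs : wgreen w col qs < wgreen w col p.
  rewrite ltNge; apply/negP => H.
  case: Mqs => Pqs; apply; exists p; split=> //; split; first lra.
  split=> //; left; lra.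
have Pqs := proj1 Mqs.
case: (boolP (has (fun e => is_red (col e) && (e \notin p)) qs)); last first.
  move=> /hasPn Hn.
  have Hs : forall e, e \in qs -> is_red (col e) -> e \in p.
    by move=> e eq re; move: (Hn e eq); rewrite re /= negbK.
  have := wred_sub w_pos (path_uniq Pqs) (path_uniq Pp) Hs.
  lra.
move=> /hasP [e eq /andP [re np]].
exists (wred w col qs), e; split.
  split; first by exists qs.
  by move=> y [q [Mq [Rq <-]]]; apply: Hqs.
split=> //.
exists (wgreen w col p); split.
  split; first by exists p.
  by move=> y [p' [Pp' [_ [Rp' <-]]]]; apply: Hp.
split; first by exists qs.
move=> y [q [Pq [eqq [Gq <-]]]].
rewrite leNgt; apply/negP => Hlt.
have [q' [Mq' [Rq' Gq']]] := dom_min w col Pq.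
have [le|lt] := lerP (wred w col q') r.
- have := Hp q' (conj (proj1 Mq') le); lra.
- have := Hqs q' (conj Mq' lt); lra.
Qed.
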